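(* Let $G$ be any graph without isolated vertices. If $f=(V_0,V_1,V_2)$ is a $\gamma_{qtR}(G)$-function and $V_{1,2}^*=\{v\in V_1: N(v)\cap V_2\neq\emptyset\}$, then $$\gamma(G)+|V_2|+|V_{1,2}^*|\le \gamma_{qtR}(G)\le 3\gamma(G).$$
   Context: All graphs are finite, simple and undirected; $N(v)$ is the open neighborhood of $v$ and $\gamma(G)$ the domination number. For $f:V(G)\to\{0,1,2\}$ write $V_i=\{v:f(v)=i\}$ and $f=(V_0,V_1,V_2)$; weight $\omega(f)=|V_1|+2|V_2|$. A quasi-total Roman dominating function (QTRDF) is an $f$ such that every vertex labeled $0$ is adjacent to a vertex labeled $2$, and every vertex isolated in the subgraph induced by $V_1\cup V_2$ has label $1$; $\gamma_{qtR}(G)$ is the minimum weight of a QTRDF, and a $\gamma_{qtR}(G)$-function is a QTRDF of weight $\gamma_{qtR}(G)$. *)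

(* Defs.v *)
From mathcomp Require Import all_boot all_order.
Set Implicit Arguments. Unset Strict Implicit. Unset Printing Implicit Defensive.

Section Graph.
Variables (T : finType) (e : rel T).

Definition nbhd (v : T) : {set T} := [set u | e v u].

Definition simple_graph := symmetric e /\ irreflexive e.

Definition no_isolated := forall v : T, exists u, e v u.

Definition dominating (D : {set T}) : bool :=
  [forall v, (v \in D) || [exists u in D, e v u]].

(* domination number; setT is dominating, so the default #|T| is harmless *)
Definition gamma : nat := \big[minn/#|T|]_(D : {set T} | dominating D) #|D|.

Definition Vi (f : {ffun T -> 'I_3}) (i : nat) : {set T} := [set v | nat_of_ord (f v) == i].

Definition weight (f : {ffun T -> 'I_3}) : nat := #|Vi f 1| + 2 * #|Vi f 2|.

Definition qtrdf (f : {ffun T -> 'I_3}) : bool :=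
  [forall v, (v \in Vi f 0) ==> [exists u in Vi f 2, e v u]] &&
  [forall v, ((v \in Vi f 1 :|: Vi f 2) &&
              ~~ [exists u in Vi f 1 :|: Vi f 2, e v u]) ==> (v \in Vi f 1)].

(* the all-1 function is a QTRDF of weight #|T|, so the default is harmless *)
Definition gamma_qtR : nat := \big[minn/(2 * #|T|)]_(f | qtrdf f) weight f.

Definition gamma_qtR_function (f : {ffun T -> 'I_3}) : Prop :=
  qtrdf f /\ weight f = gamma_qtR.

Definition V12star (f : {ffun T -> 'I_3}) : {set T} :=
  [set v in Vi f 1 | [exists u in Vi f 2, e v u]].

End Graph.

(* Main.v *)
Require Import Defs.
From mathcomp Require Import all_boot all_order.
From mathcomp Require Import zify.

Lemma bigmin_le (I : finType) (P : pred I) (F : I -> nat) x i :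
  P i -> \big[minn/x]_(j | P j) F j <= F i.
Proof.
move=> Pi; rewrite unlock /=.
have: i \in index_enum I by rewrite mem_index_enum.
elim: (index_enum I) => [|j s IH] //=; rewrite inE; case/orP => [/eqP<-|/IH h].
  by rewrite Pi geq_minl.
by case: (P j) => //; exact: leq_trans (geq_minr _ _) h.
Qed.

Arguments bigmin_le {I P} F x {i}.

Lemma construct (T : finType) (e : rel T) (hno : no_isolated e) (D : {set T}) :
  dominating e D -> gamma_qtR e <= 3 * #|D|.
Proof.
move=> domD.
pose ch v := xchoose (hno v).
have chP v : e v (ch v) := xchooseP (hno v).
pose g : {ffun T -> 'I_3} := [ffun v => if v \in D then inord 2
   else if v \in ch @: D then inord 1 else ord0].
have gE v : nat_of_ord (g v) = if v \in D then 2 else if v \in ch @: D then 1 else 0.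
  by rewrite ffunE; case: ifP => _; [|case: ifP => _]; rewrite ?inordK.
have qg : qtrdf e g.
  apply/andP; split; apply/forallP => v; apply/implyP.
  - rewrite inE gE; case: (boolP (v \in D)) => vD //.
    move=> _; move/forallP: domD => /(_ v); rewrite (negbTE vD) /=.
    case/existsP => u /andP [uD evu]; apply/existsP; exists u.
    by rewrite inE gE uD evu.
  - case/andP => H1 H; case: (boolP (v \in D)) => vD.
      case/negP: H; apply/existsP; exists (ch v); rewrite chP andbT.
      rewrite !inE !gE; case: ifP => //; by rewrite (imset_f ch vD).
    move: H1; rewrite !inE !gE (negbTE vD); by case: ifP.
have s2 : Vi g 2 \subset D.
  by apply/subsetP => v; rewrite inE gE; case: ifP => // _; case: ifP.
have s1 : Vi g 1 \subset ch @: D.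
  by apply/subsetP => v; rewrite inE gE; case: ifP => _ //; case: ifP.
have c2 := subset_leq_card s2.
have c1 := leq_trans (subset_leq_card s1) (leq_imset_card ch D).
have := bigmin_le (fun f => weight f) (2 * #|T|) qg.
rewrite /gamma_qtR /weight => h. lia.
Qed.

Theorem mainTheorem3 (T : finType) (e : rel T) (f : {ffun T -> 'I_3}) :
  simple_graph e -> no_isolated e -> gamma_qtR_function e f ->
  gamma e + #|Vi f 2| + #|V12star e f| <= gamma_qtR e /\ gamma_qtR e <= 3 * gamma e.
Proof.
move=> _ hno [qf wf]; split.
  pose D0 := Vi f 2 :|: (Vi f 1 :\: V12star e f).
  have domD : dominating e D0.
    apply/forallP => v.
    have hv : [|| v \in Vi f 0, v \in Vi f 1 | v \in Vi f 2].
      by rewrite !inE; case: (f v) => [[|[|[|n]]]].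
    case/or3P: hv => hv.
    - move/andP: qf => [/forallP /(_ v) /implyP /(_ hv) /existsP [u /andP [u2 evu]] _].
      apply/orP; right; apply/existsP; exists u; by rewrite evu !inE; move: u2; rewrite inE => ->.
    - case: (boolP (v \in V12star e f)) => hs.
        move: hs; rewrite inE => /andP [_ /existsP [u /andP [u2 evu]]].
        apply/orP; right; apply/existsP; exists u; by rewrite evu !inE; move: u2; rewrite inE => ->.
      by apply/orP; left; rewrite in_setU in_setD hs hv orbT.
    - by apply/orP; left; rewrite in_setU hv.
  have h1 : gamma e <= #|D0| := bigmin_le (fun D : {set T} => #|D|) #|T| domD.
  have h2 : #|D0| <= #|Vi f 2| + #|Vi f 1 :\: V12star e f| by apply: leq_card_setU.
  have sub : V12star e f \subset Vi f 1 by apply/subsetP => v; rewrite inE => /andP [].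
  have h3 : #|Vi f 1 :\: V12star e f| = #|Vi f 1| - #|V12star e f|.
    by rewrite cardsD (setIidPr sub).
  have h4 := subset_leq_card sub.
  clearbody D0; move: wf; rewrite /weight => wf; lia.
rewrite /gamma.
apply: (big_ind (fun x => gamma_qtR e <= 3 * x)).
- apply: leq_trans (@construct T e hno setT _) _.
    by apply/forallP => v; rewrite in_setT.
  by rewrite cardsT.
- move=> a b ha hb; rewrite /minn; by case: ifP.
- by move=> D hD; apply: construct.
Qed.
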